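(* Let $r$ be real with $0<|r|<1$, and define for $x\in\mathbb{R}$: $f_r(x):=\sum_{n=1}^\infty r^n\varphi^{(n)}(x)$ and $f_{r,N}(x):=\sum_{n=1}^{N-1}r^n\varphi^{(n)}(x)$. Let $E[f_r]:=\int_0^1 f_r(x)\,dx$. Then for every $N=1,2,\dots$ and every $x\in[0,1]$, $$\frac{f_r(x)-f_{r,N}(x)}{\frac12\sum_{n=N}^\infty r^n}=\frac{2(1-r)}{r}\cdot f_r(2^{N-1}x)=\frac{f_r(2^{N-1}x)}{E[f_r]}.$$
   Context: The tent map on $[0,1]$ is $\varphi(x)=2x$ for $x\in[0,1/2]$ and $\varphi(x)=2(1-x)$ for $x\in[1/2,1]$; it is extended to $\mathbb{R}$ by $\varphi(x):=\varphi(x-[x])$ (period 1), and $\varphi^{(n)}$ denotes the $n$-fold iterate of $\varphi$, so that $\varphi^{(n)}(x)=\varphi(2^{n-1}x)$. *)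

(* Defs.v *)
From Stdlib Require Import Reals.
From Coquelicot Require Import Coquelicot.
Open Scope R_scope.

(* Tent map on [0,1], extended with period 1 via the fractional part
   (frac_part x = x - Int_part x, Int_part = floor). *)
Definition tent01 (y : R) : R := if Rle_dec y (1/2) then 2 * y else 2 * (1 - y).
Definition phi (x : R) : R := tent01 (frac_part x).

Fixpoint phi_iter (n : nat) (x : R) : R :=
  match n with
  | O => x
  | S k => phi (phi_iter k x)
  end.

Definition f_r (r x : R) : R := Series (fun k => r ^ (S k) * phi_iter (S k) x).

(* f_{r,N}(x) = sum_{n=1}^{N-1} r^n phi^(n)(x)  (empty sum = 0 when N = 1) *)
Definition f_rN (r : R) (N : nat) (x : R) : R :=
  sum_n_m (fun n => r ^ n * phi_iter n x) 1 (N - 1).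

Definition E_f (r : R) : R := RInt (f_r r) 0 1.

Definition tail_geom (r : R) (N : nat) : R := Series (fun k => r ^ (N + k)).

(* Main.v *)
Require Import Defs.
From Stdlib Require Import Reals Lra Lia ZArith.
From Coquelicot Require Import Coquelicot.
Open Scope R_scope.


Lemma frac_id z : 0 <= z < 1 -> frac_part z = z.
Proof.
  intros H. destruct (Int_part_frac_part_spec z 0 z H) as [_ E]; [simpl; lra|]. auto.
Qed.

Lemma frac_shift k z : frac_part (IZR k + z) = frac_part z.
Proof.
  pose proof (base_fp z) as [H1 H2].
  destruct (Int_part_frac_part_spec (IZR k + z) (k + Int_part z) (frac_part z)) as [_ E].
  - lra.
  - rewrite plus_IZR. pose proof (Rplus_Int_part_frac_part z). lra.
  - auto.
Qed.

Lemma tent01_range y : 0 <= y <= 1 -> 0 <= tent01 y <= 1.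
Proof. unfold tent01; destruct (Rle_dec y (1/2)); lra. Qed.

Lemma phi_range x : 0 <= phi x <= 1.
Proof. unfold phi. apply tent01_range. pose proof (base_fp x). lra. Qed.

Lemma phi_iter_range n x : 0 <= phi_iter (S n) x <= 1.
Proof. simpl. apply phi_range. Qed.

Lemma phi_iter_comm m z : phi_iter (S m) z = phi_iter m (phi z).
Proof. induction m; simpl; auto. simpl in IHm. rewrite IHm. auto. Qed.

Lemma phi_01 x : 0 <= x < 1 -> phi x = tent01 x.
Proof. intros; unfold phi; rewrite frac_id; auto. Qed.

Lemma phi_phi y : phi (phi y) = phi (2 * y).
Proof.
  pose proof (base_fp y) as [H1 H2].
  pose proof (Rplus_Int_part_frac_part y) as Ey.
  set (f := frac_part y) in *. set (k := Int_part y) in *.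
  assert (E2 : phi (2 * y) = phi (2 * f)).
  { unfold phi. replace (2 * y) with (IZR (2 * k) + 2 * f).
    - rewrite frac_shift; auto.
    - rewrite mult_IZR. lra. }
  rewrite E2. assert (Ep : phi y = tent01 f) by reflexivity. rewrite Ep. unfold tent01 at 1.
  destruct (Rle_dec f (1/2)) as [Hf|Hf].
  - auto.
  - rewrite phi_01 by lra.
    unfold phi. replace (2 * f) with (IZR 1 + (2 * f - 1)) by (simpl; lra).
    rewrite frac_shift, frac_id by lra.
    unfold tent01. destruct (Rle_dec (2 * (1 - f)) (1/2)); destruct (Rle_dec (2 * f - 1) (1/2)); lra.
Qed.

Lemma phi_iter_double m y : phi_iter (S m) (2 * y) = phi_iter (S (S m)) y.
Proof.
  rewrite (phi_iter_comm (S m) y), !phi_iter_comm, phi_phi. auto.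
Qed.

Lemma phi_iter_pow j m y : phi_iter (S m) (2 ^ j * y) = phi_iter (S m + j) y.
Proof.
  revert m y; induction j; intros m y.
  - rewrite pow_O, Rmult_1_l, Nat.add_0_r. reflexivity.
  - replace (2 ^ S j * y) with (2 ^ j * (2 * y)) by (simpl; ring).
    rewrite IHj. replace (S m + j)%nat with (S (m + j)) by lia.
    rewrite phi_iter_double. f_equal. lia.
Qed.


Lemma geom_series q : Rabs q < 1 -> Series (fun k => q ^ k) = / (1 - q).
Proof. intros; apply is_series_unique, is_series_geom; auto. Qed.

Lemma geom_ex q : Rabs q < 1 -> ex_series (fun k => q ^ k).
Proof. intros; eexists; apply is_series_geom; auto. Qed.

Lemma geom_scal_ex a q : Rabs q < 1 -> ex_series (fun k => a * q ^ k).
Proof.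
  intros H. apply (ex_series_ext (fun k => scal a (q ^ k))); [reflexivity|].
  exists (scal a (/ (1 - q))). apply (@is_series_scal_l R_AbsRing R_NormedModule). apply is_series_geom; auto.
Qed.


Lemma absA_le (r : R) (hr1 : Rabs r < 1) (c : nat -> R) (hc : forall k, 0 <= c k <= 1) k m : Rabs (r ^ (S (m + k)) * c (m + k)%nat) <= Rabs r ^ m * Rabs r ^ k.
Proof.
  rewrite Rabs_mult, <- RPow_abs, <- pow_add.
  rewrite (Rabs_right (c _)) by (destruct (hc (m+k)%nat); lra).
  assert (0 <= Rabs r) by apply Rabs_pos.
  assert (0 <= Rabs r ^ (m + k)) by (apply pow_le; auto).
  assert (Rabs r ^ S (m + k) <= Rabs r ^ (m + k)).
  { simpl. assert (Rabs r * Rabs r ^ (m+k) <= 1 * Rabs r ^ (m+k)) by (apply Rmult_le_compat_r; lra). lra. }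
  assert (Rabs r ^ S (m + k) * c (m+k)%nat <= Rabs r ^ S (m + k) * 1).
  { apply Rmult_le_compat_l. apply pow_le; auto. apply hc. }
  lra.
Qed.

Lemma serA_ex_shift (r : R) (hr1 : Rabs r < 1) (c : nat -> R) (hc : forall k, 0 <= c k <= 1) m : ex_series (fun k => r ^ (S (m + k)) * c (m + k)%nat).
Proof.
  apply (@ex_series_le R_AbsRing R_CompleteNormedModule _ (fun k => Rabs r ^ m * Rabs r ^ k)).
  - intros k. change (norm (r ^ S (m + k) * c (m + k)%nat)) with (Rabs (r ^ S (m + k) * c (m + k)%nat)).
    apply (absA_le r hr1 c hc).
  - apply geom_scal_ex. rewrite Rabs_Rabsolu; auto.
Qed.

Lemma serA_ex (r : R) (hr1 : Rabs r < 1) (c : nat -> R) (hc : forall k, 0 <= c k <= 1) : ex_series (fun k => r ^ (S k) * c k).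
Proof. apply (ex_series_ext (fun k => r ^ (S (0 + k)) * c (0 + k)%nat)); [reflexivity|]. apply (serA_ex_shift r hr1 c hc). Qed.

Lemma tail_bound (r : R) (hr1 : Rabs r < 1) (c : nat -> R) (hc : forall k, 0 <= c k <= 1) M :
  Rabs (Series (fun k => r ^ (S k) * c k) - sum_n (fun k => r ^ (S k) * c k) M)
   <= Rabs r ^ M / (1 - Rabs r).
Proof.
  rewrite (Series_incr_n _ (S M)) by (auto with arith || apply (serA_ex r hr1 c hc)).
  rewrite sum_n_Reals. simpl pred.
  replace (sum_f_R0 (fun k => r ^ S k * c k) M + Series (fun k => r ^ S (S M + k) * c (S M + k)%nat) -
           sum_f_R0 (fun k => r ^ S k * c k) M) with (Series (fun k => r ^ S (S M + k) * c (S M + k)%nat)) by ring.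
  eapply Rle_trans. apply Series_Rabs.
  - apply (@ex_series_le R_AbsRing R_CompleteNormedModule _ (fun k => Rabs r ^ (S M) * Rabs r ^ k)).
    + intros k. change (norm (Rabs (r ^ S (S M + k) * c (S M + k)%nat))) with
        (Rabs (Rabs (r ^ S (S M + k) * c (S M + k)%nat))). rewrite Rabs_Rabsolu. apply (absA_le r hr1 c hc).
    + apply geom_scal_ex. rewrite Rabs_Rabsolu; auto.
  - eapply Rle_trans. apply (Series_le _ (fun k => Rabs r ^ M * Rabs r ^ k)).
    + intros k. split. apply Rabs_pos.
      eapply Rle_trans. apply (absA_le r hr1 c hc). apply Rmult_le_compat_r. apply pow_le, Rabs_pos.
      simpl. assert (0 <= Rabs r ^ M) by (apply pow_le, Rabs_pos).
      assert (Rabs r * Rabs r ^ M <= 1 * Rabs r ^ M) by (apply Rmult_le_compat_r; lra). lra.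
    + apply geom_scal_ex. rewrite Rabs_Rabsolu; auto.
    + rewrite Series_scal_l, geom_series by (rewrite Rabs_Rabsolu; auto). unfold Rdiv. lra.
Qed.



Lemma int_tent (g : R -> R) I : is_RInt g 0 1 I -> is_RInt (fun x => g (tent01 x)) 0 1 I.
Proof.
  intros H.
  assert (H1 : is_RInt (fun y => g (2 * y)) 0 (1/2) (I / 2)).
  { assert (H' : is_RInt g (2 * 0 + 0) (2 * (1/2) + 0) I).
    { replace (2 * 0 + 0) with 0 by ring. replace (2 * (1/2) + 0) with 1 by field. auto. }
    apply is_RInt_comp_lin in H'.
    apply (is_RInt_scal _ _ _ (1/2)) in H'.
    replace (I / 2) with (scal (1/2) I) by (unfold scal; simpl; unfold mult; simpl; field).
    eapply is_RInt_ext; [|exact H'].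
    intros x _. unfold scal; simpl; unfold mult; simpl. rewrite Rplus_0_r. field. }
  assert (H2 : is_RInt (fun y => g (2 * (1 - y))) (1/2) 1 (I / 2)).
  { assert (H' : is_RInt g (-2 * (1/2) + 2) (-2 * 1 + 2) (opp I)).
    { replace (-2 * (1/2) + 2) with 1 by field. replace (-2 * 1 + 2) with 0 by ring.
      apply is_RInt_swap; auto. }
    apply is_RInt_comp_lin in H'.
    apply (is_RInt_scal _ _ _ (-1/2)) in H'.
    replace (I / 2) with (scal (-1/2) (opp I)).
    eapply is_RInt_ext; [|exact H'].
    intros x _. unfold scal; simpl; unfold mult; simpl.
    replace (-2 * x + 2) with (2 * (1 - x)) by ring. field.
    unfold scal, opp; simpl; unfold mult; simpl. field. }
  replace I with (plus (I/2) (I/2)) by (unfold plus; simpl; field).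
  apply (@is_RInt_Chasles R_NormedModule (fun x => g (tent01 x)) 0 (1/2) 1 (I/2) (I/2)).
  - eapply is_RInt_ext; [|exact H1]. intros x Hx.
    rewrite Rmin_left, Rmax_right in Hx by lra.
    unfold tent01. destruct (Rle_dec x (1/2)); [auto | lra].
  - eapply is_RInt_ext; [|exact H2]. intros x Hx.
    rewrite Rmin_left, Rmax_right in Hx by lra.
    unfold tent01. destruct (Rle_dec x (1/2)); [lra | auto].
Qed.

Lemma int_id : is_RInt (fun x => x) 0 1 (1/2).
Proof.
  replace (1/2) with (minus ((fun x => x * x / 2) 1) ((fun x => x * x / 2) 0)).
  2:{ unfold minus, plus, opp; simpl. field. }
  apply (@is_RInt_derive R_CompleteNormedModule (fun x => x * x / 2)).
  - intros x _. auto_derive; auto. field.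
  - intros x _. apply continuous_id.
Qed.

Lemma int_phi_iter n : is_RInt (phi_iter (S n)) 0 1 (1/2).
Proof.
  induction n.
  - pose proof (int_tent _ _ int_id) as H0. eapply is_RInt_ext; [|exact H0].
    intros x Hx. rewrite Rmin_left, Rmax_right in Hx by lra. simpl. rewrite phi_01 by lra. auto.
  - apply int_tent in IHn. eapply is_RInt_ext; [|exact IHn].
    intros x Hx. rewrite Rmin_left, Rmax_right in Hx by lra.
    rewrite (phi_iter_comm (S n)). rewrite phi_01 by lra. auto.
Qed.


Lemma int_partial r M :
  is_RInt (fun x => sum_n (fun k => r ^ (S k) * phi_iter (S k) x) M) 0 1
          (sum_n (fun k => r ^ (S k) * (1/2)) M).
Proof.
  induction M.
  - rewrite sum_O.
    apply (is_RInt_ext (fun x => r ^ 1 * phi_iter 1 x)).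
    { intros x _. rewrite sum_O. reflexivity. }
    apply (@is_RInt_scal R_NormedModule (phi_iter 1) 0 1 (r ^ 1) (1/2)), int_phi_iter.
  - rewrite sum_Sn.
    apply (is_RInt_ext (fun x => plus (sum_n (fun k => r ^ (S k) * phi_iter (S k) x) M)
                                      (r ^ (S (S M)) * phi_iter (S (S M)) x))).
    { intros x _. rewrite sum_Sn. reflexivity. }
    apply (@is_RInt_plus R_NormedModule). exact IHM.
    apply (@is_RInt_scal R_NormedModule (phi_iter (S (S M))) 0 1 (r ^ (S (S M))) (1/2)), int_phi_iter.
Qed.

Lemma E_val r : Rabs r < 1 -> E_f r = r / (2 * (1 - r)).
Proof.
  intros hr.
  assert (Hlim : filterlim (fun M x => sum_n (fun k => r ^ (S k) * phi_iter (S k) x) M) eventually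
                   (@locally (fct_UniformSpace R R_UniformSpace) (f_r r))).
  { apply (proj2 (@filterlim_locally nat (fct_UniformSpace R R_UniformSpace) eventually _ _ (f_r r))). intros eps.
    assert (Hg := is_lim_seq_geom (Rabs r)). rewrite Rabs_Rabsolu in Hg. specialize (Hg hr).
    apply is_lim_seq_spec in Hg.
    assert (Hp : 0 < eps * (1 - Rabs r)).
    { apply Rmult_lt_0_compat. apply cond_pos. lra. }
    specialize (Hg (mkposreal _ Hp)).
    eapply filter_imp; [|exact Hg]. simpl. intros M HM t.
    unfold ball; simpl; unfold AbsRing_ball, abs, minus, plus, opp; simpl.
    rewrite Rminus_0_r, Rabs_right in HM by (apply Rle_ge, pow_le, Rabs_pos).
    pose proof (tail_bound r hr (fun k => phi_iter (S k) t) (fun k => phi_iter_range k t) M) as T.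
    rewrite Rabs_minus_sym in T. unfold f_r. 
    eapply Rle_lt_trans. exact T.
    apply (Rmult_lt_reg_r (1 - Rabs r)). lra. unfold Rdiv. rewrite Rmult_assoc, Rinv_l by lra. lra. }
  destruct (@filterlim_RInt nat R_CompleteNormedModule
     (fun M x => sum_n (fun k => r ^ (S k) * phi_iter (S k) x) M) 0 1 eventually eventually_filter (f_r r)
     (fun M => sum_n (fun k => r ^ (S k) * (1/2)) M) (int_partial r) Hlim)
    as [If [Hh Hi]].
  unfold E_f. rewrite (is_RInt_unique _ _ _ _ Hi).
  assert (S1 : is_series (fun k => r ^ (S k) * (1/2)) If) by exact Hh.
  assert (S2 : is_series (fun k => r ^ (S k) * (1/2)) (r / (2 * (1 - r)))).
  { apply (is_series_ext (fun k => scal (r/2) (r ^ k))).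
    intros k. unfold scal; simpl; unfold mult; simpl. field.
    replace (r / (2 * (1 - r))) with (scal (r/2) (/ (1 - r))).
    apply (@is_series_scal_l R_AbsRing R_NormedModule). apply is_series_geom; auto.
    unfold scal; simpl; unfold mult; simpl. field.
    assert (r < 1) by (pose proof (Rle_abs r); lra). lra. }
  apply is_series_unique in S1. apply is_series_unique in S2. congruence.
Qed.



Lemma num_shift r (hr : Rabs r < 1) x p :
  f_r r x - f_rN r (S p) x = Series (fun k => r ^ (S (p + k)) * phi_iter (S (p + k)) x).
Proof.
  unfold f_r, f_rN. replace (S p - 1)%nat with p by lia.
  induction p.
  - rewrite sum_n_m_zero by lia. unfold zero; simpl. rewrite Rminus_0_r. apply Series_ext. intros k. reflexivity.
  - rewrite sum_n_Sm by lia.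
    assert (IH' : Series (fun k => r ^ S k * phi_iter (S k) x) - sum_n_m (fun n => r ^ n * phi_iter n x) 1 p
       = r ^ S (p + 0) * phi_iter (S (p + 0)) x + Series (fun k => r ^ S (S p + k) * phi_iter (S (S p + k)) x)).
    { rewrite IHp. rewrite (Series_incr_1 (fun k => r ^ S (p + k) * phi_iter (S (p + k)) x)).
      f_equal. apply Series_ext. intros k. replace (p + S k)%nat with (S p + k)%nat by lia. reflexivity.
      apply (serA_ex_shift r hr (fun k => phi_iter (S k) x) (fun k => phi_iter_range k x)). }
    rewrite Nat.add_0_r in IH'. change (@plus R_AbelianMonoid ?u ?v) with (u + v). lra.
Qed.

Lemma num_val r (hr : Rabs r < 1) x p :
  f_r r x - f_rN r (S p) x = r ^ p * f_r r (2 ^ p * x).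
Proof.
  rewrite num_shift by auto. unfold f_r. rewrite <- Series_scal_l. apply Series_ext. intros k.
  rewrite phi_iter_pow. replace (S k + p)%nat with (S (p + k)) by lia.
  replace (S (p + k)) with (p + S k)%nat by lia. rewrite pow_add. ring.
Qed.

Lemma tail_val r (hr : Rabs r < 1) N : tail_geom r N = r ^ N / (1 - r).
Proof.
  unfold tail_geom. rewrite (Series_ext _ (fun k => r ^ N * r ^ k)) by (intros; apply pow_add).
  rewrite Series_scal_l, geom_series by auto. unfold Rdiv. ring.
Qed.

Theorem lemma3p1 (r : R) (hr0 : 0 < Rabs r) (hr1 : Rabs r < 1)
  (N : nat) (hN : (1 <= N)%nat) (x : R) (hx : 0 <= x <= 1) :
  (f_r r x - f_rN r N x) / (1/2 * tail_geom r N)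
    = 2 * (1 - r) / r * f_r r (2 ^ (N - 1) * x)
  /\ 2 * (1 - r) / r * f_r r (2 ^ (N - 1) * x)
    = f_r r (2 ^ (N - 1) * x) / E_f r.
Proof.
  destruct N as [|p]; [lia|]. replace (S p - 1)%nat with p by lia.
  assert (rn0 : r <> 0) by (intro E; rewrite E, Rabs_R0 in hr0; lra).
  assert (r1 : 1 - r <> 0) by (pose proof (Rle_abs r); lra).
  assert (rp : r ^ p <> 0) by (apply pow_nonzero; auto).
  rewrite num_val, tail_val, E_val by auto.
  split; simpl; field; auto.
Qed.
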